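(* Let $(Q,P)$ be a weakly quasi-lattice ordered group and let $\Lambda$ be a $P$-graph with $\mathrm{FA}(\Lambda)\neq\emptyset$. Let $\mathcal{X}(\Lambda)*P=\{(x,m)\in\mathcal{X}(\Lambda)\times P: x\cap\Lambda^m\neq\emptyset\}$ and define $T:\mathcal{X}(\Lambda)*P\to\mathcal{X}(\Lambda)$ by $T(x,m)=x\cdot m:=\{\mu\in\Lambda: x(0,m)\mu\in x\}$, where $x(0,m)$ is the unique element of $x\cap\Lambda^m$. Then $T$ is well defined with values in $\mathcal{X}(\Lambda)$ and $(\mathcal{X}(\Lambda),P,T)$ is a semigroup action: (S1) for all $x\in\mathcal{X}(\Lambda)$, $(x,e)\in\mathcal{X}(\Lambda)*P$ and $x\cdot e=x$; (S2) for all $x\in\mathcal{X}(\Lambda)$ and $m,n\in P$, $(x,mn)\in\mathcal{X}(\Lambda)*P$ if and only if $(x,m)\in\mathcal{X}(\Lambda)*P$ and $(x\cdot m,n)\in\mathcal{X}(\Lambda)*P$, in which case $(x\cdot m)\cdot n=x\cdot(mn)$.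
   Context: $(Q,P)$ weakly quasi-lattice ordered: $Q$ a discrete group, $P\subseteq Q$ a subsemigroup containing the identity $e$ with $P\cap P^{-1}=\{e\}$, and, with $p\le r$ meaning $pq=r$ for some $q\in P$, any two elements of $P$ with a common upper bound have a least common upper bound. A $P$-graph is a countable small category $\Lambda$ (range/source $r,s$) with a functor $d:\Lambda\to P$ with unique factorisation (if $d(\lambda)=pq$ there are unique $\mu,\nu$ with $\lambda=\mu\nu$, $d(\mu)=p$, $d(\nu)=q$). Write $\Lambda^m=d^{-1}(m)$, $\lambda\Lambda=\{\lambda\mu: s(\lambda)=r(\mu)\}$, $\mu\preceq\lambda$ iff $\lambda\in\mu\Lambda$. $\mathrm{FA}(\Lambda)$ is the set of $\lambda$ such that for all $\mu\in\lambda\Lambda,\nu\in\Lambda$ there is a finite $J\subseteq\Lambda$ with $\mu\Lambda\cap\nu\Lambda=\bigcup_{\kappa\in J}\kappa\Lambda$. A filter is a nonempty hereditary and directed subset of $\Lambda$ (w.r.t. $\preceq$); for a filter $x$, $d|_x$ is injective. The path space is $\mathcal{X}(\Lambda)=\{x: x\text{ a filter}, x\cap\mathrm{FA}(\Lambda)\neq\emptyset\}$. *)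

(* Defs.v *)
From Stdlib Require Import List.

Record group := Group {
  gcar :> Type;
  gmul : gcar -> gcar -> gcar;
  gone : gcar;
  ginv : gcar -> gcar;
  gmulA : forall a b c, gmul a (gmul b c) = gmul (gmul a b) c;
  gmul1l : forall a, gmul gone a = a;
  gmul1r : forall a, gmul a gone = a;
  gmulVl : forall a, gmul (ginv a) a = gone;
  gmulVr : forall a, gmul a (ginv a) = gone
}.

Definition pleq (Q : group) (P : Q -> Prop) (p r : Q) : Prop :=
  exists q, P q /\ gmul Q p q = r.

Definition WQLO (Q : group) (P : Q -> Prop) : Prop :=
  P (gone Q) /\
  (forall p q, P p -> P q -> P (gmul Q p q)) /\
  (forall p, P p -> P (ginv Q p) -> p = gone Q) /\
  (forall p q, P p -> P q ->
     (exists r, P r /\ pleq Q P p r /\ pleq Q P q r) ->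
     exists c, P c /\ pleq Q P p c /\ pleq Q P q c /\
       forall b, P b -> pleq Q P p b -> pleq Q P q b -> pleq Q P c b).

(** A countable small category, given by its morphisms; [comp l m] is
    the composite "l m" (defined when [src l = rng m]). *)
Record category := Category {
  Ob : Type;
  Mor : Type;
  src : Mor -> Ob;
  rng : Mor -> Ob;
  idm : Ob -> Mor;
  comp : Mor -> Mor -> Mor;
  src_idm : forall v, src (idm v) = v;
  rng_idm : forall v, rng (idm v) = v;
  rng_comp : forall l m, src l = rng m -> rng (comp l m) = rng l;
  src_comp : forall l m, src l = rng m -> src (comp l m) = src m;
  comp_idl : forall l, comp (idm (rng l)) l = l;
  comp_idr : forall l, comp l (idm (src l)) = l;
  compA : forall l m n, src l = rng m -> src m = rng n ->
            comp l (comp m n) = comp (comp l m) n;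
  Mor_countable : exists f : Mor -> nat, forall a b, f a = f b -> a = b;
  Ob_countable : exists f : Ob -> nat, forall a b, f a = f b -> a = b
}.
Arguments src {c} _.
Arguments rng {c} _.

Record Pgraph (Q : group) (P : Q -> Prop) := PGraph {
  pcat :> category;
  deg : Mor pcat -> Q;
  deg_P : forall l, P (deg l);
  deg_idm : forall v, deg (idm pcat v) = gone Q;
  deg_comp : forall l m, src l = rng m ->
     deg (comp pcat l m) = gmul Q (deg l) (deg m);
  unique_fact : forall l p q, P p -> P q -> deg l = gmul Q p q ->
     exists mu nu, src mu = rng nu /\ l = comp pcat mu nu /\
       deg mu = p /\ deg nu = q /\
       forall mu' nu', src mu' = rng nu' -> l = comp pcat mu' nu' ->
         deg mu' = p -> deg nu' = q -> mu' = mu /\ nu' = nu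
}.

Arguments deg {Q P} _ _.
Arguments pleq : clear implicits.

Section PgraphDefs.
Variables (Q : group) (P : Q -> Prop) (L : Pgraph Q P).

Definition inext (l a : Mor L) : Prop :=
  exists m, src l = rng m /\ a = comp L l m.

Definition preceq (m l : Mor L) : Prop := inext m l.

Definition FA (l : Mor L) : Prop :=
  forall mu nu, inext l mu ->
    exists J : list (Mor L),
      forall a, (inext mu a /\ inext nu a) <-> exists k, In k J /\ inext k a.

Definition is_filter (x : Mor L -> Prop) : Prop :=
  (exists l, x l) /\
  (forall l m, x l -> preceq m l -> x m) /\
  (forall l m, x l -> x m -> exists n, x n /\ preceq l n /\ preceq m n).

Definition pathspace (x : Mor L -> Prop) : Prop :=
  is_filter x /\ exists l, x l /\ FA l.

Definition XstarP (x : Mor L -> Prop) (m : Q) : Prop :=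
  pathspace x /\ P m /\ exists l, x l /\ deg L l = m.

Definition shift (x : Mor L -> Prop) (m : Q) : Mor L -> Prop :=
  fun mu => exists l, x l /\ deg L l = m /\ src l = rng mu /\ x (comp L l mu).

End PgraphDefs.
Arguments inext {Q P} L _ _.
Arguments preceq {Q P} L _ _.
Arguments FA {Q P} L _.
Arguments is_filter {Q P} L _.
Arguments pathspace {Q P} L _.
Arguments XstarP {Q P} L _ _.
Arguments shift {Q P} L _ _ _.

(* Main.v *)
Require Import Defs.
From Stdlib Require Import List Classical.

Lemma gcancel (Q : group) (a b c : Q) : gmul Q a b = gmul Q a c -> b = c.
Proof. intro H. rewrite <- (gmul1l Q b), <- (gmul1l Q c), <- (gmulVl Q a), <- !gmulA, H. reflexivity. Qed.

Section S.
Variables (Q : group) (P : Q -> Prop) (L : Pgraph Q P).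
Local Notation C := (pcat Q P L).
Local Notation cp := (comp C).

Lemma lcancel (l a b : Mor C) : src l = rng a -> src l = rng b -> cp l a = cp l b -> a = b.
Proof.
 intros Ha Hb E.
 assert (Hd : deg L a = deg L b).
 { apply (gcancel Q (deg L l)). rewrite <- (deg_comp Q P L l a Ha), <- (deg_comp Q P L l b Hb). now rewrite E. }
 destruct (unique_fact Q P L (cp l a) (deg L l) (deg L a) (deg_P _ _ L l) (deg_P _ _ L a) (deg_comp _ _ L l a Ha)) as [mu [nu [_ [_ [_ [_ U]]]]]].
 destruct (U l a Ha eq_refl eq_refl eq_refl) as [_ E1].
 destruct (U l b Hb E eq_refl (eq_sym Hd)) as [_ E2]. congruence.
Qed.

Lemma pre_refl (l : Mor C) : preceq L l l.
Proof. exists (idm C (src l)). split. now rewrite rng_idm. now rewrite comp_idr. Qed.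

Lemma pre_trans (a b d : Mor C) : preceq L a b -> preceq L b d -> preceq L a d.
Proof.
 intros [c [H1 E1]] [e [H2 E2]]. subst b d.
 rewrite src_comp in H2 by exact H1.
 exists (cp c e). split. rewrite rng_comp by exact H2. exact H1.
 symmetry; apply compA; assumption.
Qed.

Lemma pre_rng (a b : Mor C) : preceq L a b -> rng b = rng a.
Proof. intros [c [H E]]. subst. apply rng_comp; exact H. Qed.

Lemma inext_lift (l y t : Mor C) : inext L y t -> src l = rng y -> inext L (cp l y) (cp l t).
Proof.
 intros [c [H E]] Hl. subst t. exists c. split. rewrite src_comp by exact Hl. exact H.
 apply compA; assumption.
Qed.

Lemma inext_unlift (l y t : Mor C) : inext L (cp l y) (cp l t) -> src l = rng y -> src l = rng t -> inext L y t.
Proof.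
 intros [e [H E]] Hy Ht. rewrite src_comp in H by exact Hy.
 rewrite <- compA in E by assumption.
 exists e. split. exact H. apply (lcancel l). exact Ht. rewrite rng_comp by exact H. exact Hy. exact E.
Qed.

Lemma id_deg (l : Mor C) : deg L l = gone Q -> l = idm C (rng l).
Proof.
 intro Hd.
 assert (Pe : P (gone Q)) by (rewrite <- Hd; apply deg_P).
 assert (Hd' : deg L l = gmul Q (gone Q) (gone Q)) by (rewrite gmul1l; exact Hd).
 destruct (unique_fact Q P L l _ _ Pe Pe Hd') as [mu [nu [_ [_ [_ [_ U]]]]]].
 destruct (U l (idm C (src l))) as [E1 _].
 - now rewrite rng_idm.
 - now rewrite comp_idr.
 - exact Hd.
 - apply deg_idm.
 - destruct (U (idm C (rng l)) l) as [E2 _].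
   + now rewrite src_idm.
   + now rewrite comp_idl.
   + apply deg_idm.
   + exact Hd.
   + congruence.
Qed.

Lemma FA_ext (l n : Mor C) : FA L l -> inext L l n -> FA L n.
Proof. intros F H mu nu Hm. apply F. exact (pre_trans _ _ _ H Hm). Qed.

Lemma lift_list (l : Mor C) (J : list (Mor C)) : (forall k, In k J -> inext L l k) ->
  exists J', (forall k, In k J -> exists k', In k' J' /\ src l = rng k' /\ k = cp l k') /\
             (forall k', In k' J' -> src l = rng k' /\ In (cp l k') J).
Proof.
 induction J as [|k J IH]; intro HJ.
 - exists nil. split; intros ? [].
 - destruct IH as [J' [A B]]. { intros; apply HJ; right; assumption. }
   destruct (HJ k (or_introl eq_refl)) as [k' [Hk' Ek]].
   exists (k' :: J'). split.
   + intros k0 [<-|Hin]. exists k'. split. left; reflexivity. split; assumption.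
     destruct (A k0 Hin) as [k1 [? [? ?]]]. exists k1. split. right; assumption. split; assumption.
   + intros k0 [<-|Hin]. split. exact Hk'. left. rewrite Ek; reflexivity.
     destruct (B k0 Hin) as [? ?]. split. assumption. right; assumption.
Qed.

Lemma FA_shift (l a : Mor C) : src l = rng a -> FA L (cp l a) -> FA L a.
Proof.
 intros Hla F mu nu Hm.
 assert (Hmu : src l = rng mu) by (rewrite (pre_rng _ _ Hm); exact Hla).
 destruct (classic (src l = rng nu)) as [Hnu|Hnu].
 - destruct (F (cp l mu) (cp l nu)) as [J HJ].
   { apply inext_lift; assumption. }
   destruct (lift_list l J) as [J' [A B]].
   { intros k Hk. assert (Hkk : inext L k k) by apply pre_refl.
     destruct (proj2 (HJ k) (ex_intro _ k (conj Hk Hkk))) as [H1 _].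
     destruct H1 as [c [Hc E]]. exists (cp mu c). split.
     rewrite rng_comp. exact Hmu. rewrite src_comp in Hc by exact Hmu. exact Hc.
     rewrite E. symmetry. apply compA. exact Hmu. rewrite src_comp in Hc by exact Hmu. exact Hc. }
   exists J'. intro t. split.
   + intros [H1 H2].
     assert (Ht : src l = rng t) by (rewrite (pre_rng _ _ H1); exact Hmu).
     destruct (proj1 (HJ (cp l t))) as [k [Hk Hkt]].
     { split; apply inext_lift; assumption. }
     destruct (A k Hk) as [k' [Hk' [Hl' Ek]]]. subst k.
     exists k'. split. exact Hk'. apply (inext_unlift l); assumption.
   + intros [k' [Hk' Ht]].
     destruct (B k' Hk') as [Hl' HJk].
     assert (Hrt : src l = rng t) by (rewrite (pre_rng _ _ Ht); exact Hl').
     destruct (proj2 (HJ (cp l t))) as [H1 H2].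
     { exists (cp l k'). split. exact HJk. apply inext_lift; assumption. }
     split; apply (inext_unlift l); assumption.
 - exists nil. intro t. split.
   + intros [H1 H2]. exfalso. apply Hnu. rewrite Hmu, <- (pre_rng _ _ H1), (pre_rng _ _ H2). reflexivity.
   + intros [k [[] _]].
Qed.

Lemma deg_inj (x : Mor C -> Prop) (l l' : Mor C) : is_filter L x -> x l -> x l' -> deg L l = deg L l' -> l = l'.
Proof.
 intros [_ [_ D]] Hl Hl' Hd.
 destruct (D l l' Hl Hl') as [n [_ [[a [Ha Ea]] [a' [Ha' Ea']]]]].
 assert (Hda : deg L a = deg L a').
 { apply (gcancel Q (deg L l)). rewrite <- (deg_comp Q P L l a Ha), Hd, <- (deg_comp Q P L l' a' Ha'). congruence. }
 destruct (unique_fact Q P L n (deg L l) (deg L a) (deg_P _ _ L l) (deg_P _ _ L a)) as [mu [nu [_ [_ [_ [_ U]]]]]].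
 { rewrite Ea. apply deg_comp; exact Ha. }
 destruct (U l a Ha Ea eq_refl eq_refl) as [E1 _].
 destruct (U l' a' Ha' Ea' (eq_sym Hd) (eq_sym Hda)) as [E2 _]. congruence.
Qed.

Lemma shift_path (x : Mor C -> Prop) (m : Q) : XstarP L x m ->
     (exists l, x l /\ deg L l = m /\
        forall l', x l' -> deg L l' = m -> l' = l) /\
     pathspace L (shift L x m).
Proof.
 intros [Hx [Pm [l [Hl Hdl]]]].
 destruct Hx as [Hf [lam [Hlam Flam]]].
 pose proof Hf as Hf'.
 destruct Hf' as [[l0 Hl0] [Her Dir]].
 split.
 { exists l. split. exact Hl. split. exact Hdl. intros l' Hl' Hd'.
   apply (deg_inj x); try assumption. congruence. }
 split; [split; [|split]|].
 - exists (idm C (src l)). exists l. split. exact Hl. split. exact Hdl. split.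
   now rewrite rng_idm. now rewrite comp_idr.
 - intros mu nu [l1 [H1 [D1 [S1 X1]]]] Hpre.
   assert (Hr : src l1 = rng nu) by (rewrite S1; apply pre_rng; exact Hpre).
   exists l1. split. exact H1. split. exact D1. split. exact Hr.
   apply (Her (cp l1 mu)). exact X1. apply inext_lift; assumption.
 - intros mu mu' [l1 [H1 [D1 [S1 X1]]]] [l2 [H2 [D2 [S2 X2]]]].
   assert (E : l2 = l1) by (apply (deg_inj x); try assumption; congruence). subst l2.
   destruct (Dir (cp l1 mu) (cp l1 mu') X1 X2) as [nn [Hn [[c [Hc En]] Hpre2]]].
   rewrite src_comp in Hc by exact S1.
   assert (Sw : src l1 = rng (cp mu c)) by (rewrite rng_comp by exact Hc; exact S1).
   assert (Ew : cp l1 (cp mu c) = nn) by (rewrite En; apply compA; assumption).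
   exists (cp mu c). split.
   + exists l1. split. exact H1. split. exact D1. split. exact Sw. rewrite Ew. exact Hn.
   + split. exists c. split. exact Hc. reflexivity.
     apply (inext_unlift l1). rewrite Ew. exact Hpre2. exact S2. exact Sw.
 - destruct (Dir lam l Hlam Hl) as [nn [Hn [Hp1 [a [Ha En]]]]].
   exists a. split.
   + exists l. split. exact Hl. split. exact Hdl. split. exact Ha. rewrite <- En. exact Hn.
   + apply (FA_shift l a Ha). rewrite <- En. exact (FA_ext lam nn Flam Hp1).
Qed.

End S.

Theorem proposition5p9 (Q : group) (P : Q -> Prop) (L : Pgraph Q P) :
  WQLO Q P ->
  (exists l, FA L l) ->
  (* T is well defined with values in X(Λ) *)
  (forall x m, XstarP L x m ->
     (exists l, x l /\ deg L l = m /\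
        forall l', x l' -> deg L l' = m -> l' = l) /\
     pathspace L (shift L x m)) /\
  (* (S1) *)
  (forall x, pathspace L x ->
     XstarP L x (gone Q) /\ (forall mu, shift L x (gone Q) mu <-> x mu)) /\
  (* (S2) *)
  (forall x m n, pathspace L x -> P m -> P n ->
     (XstarP L x (gmul Q m n) <->
        XstarP L x m /\ XstarP L (shift L x m) n) /\
     (XstarP L x (gmul Q m n) ->
        forall mu, shift L (shift L x m) n mu <-> shift L x (gmul Q m n) mu)).
Proof.
 intros W _. destruct W as [Pe [Pmul _]].
 split; [|split].
 - intros x m H. exact (shift_path Q P L x m H).
 - intros x Hx. pose proof Hx as Hx'. destruct Hx' as [[[l0 Hl0] [Her Dir]] _]. split.
   + split. exact Hx. split. exact Pe. exists (idm _ (rng l0)). split.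
     * apply (Her l0). exact Hl0. exists l0. split. now rewrite src_idm. now rewrite comp_idl.
     * apply deg_idm.
   + intro mu. split.
     * intros [l1 [H1 [D1 [S1 X1]]]].
       pose proof (id_deg Q P L l1 D1) as E.
       rewrite E in X1, S1. rewrite src_idm in S1. rewrite S1 in X1. rewrite comp_idl in X1. exact X1.
     * intro Hm. exists (idm _ (rng mu)). split.
       apply (Her mu). exact Hm. exists mu. split. now rewrite src_idm. now rewrite comp_idl.
       split. apply deg_idm. split. now rewrite src_idm. now rewrite comp_idl.
 - intros x m n Hx Pm Pn. pose proof Hx as Hx'. destruct Hx' as [[[l0 Hl0] [Her Dir]] _]. split.
   + split.
     * intros [_ [Pmn [lam [Hlam Dlam]]]].
       destruct (unique_fact Q P L lam m n Pm Pn Dlam) as [a [b [Sab [E [Da [Db _]]]]]].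
       assert (Ha : x a) by (apply (Her lam); [exact Hlam| exists b; split; assumption]).
       assert (Xm : XstarP L x m) by (split; [exact Hx| split; [exact Pm| exists a; split; assumption]]).
       split. exact Xm.
       split. exact (proj2 (shift_path Q P L x m Xm)). split. exact Pn.
       exists b. split; [|exact Db]. exists a. split. exact Ha. split. exact Da. split. exact Sab.
       rewrite <- E. exact Hlam.
     * intros [[_ [_ [a [Ha Da]]]] [Hs [_ [b [[a' [Ha' [Da' [S' X']]]] Db]]]]].
       split. exact Hx. split. apply Pmul; assumption.
       exists (comp _ a' b). split. exact X'. rewrite deg_comp by exact S'. congruence.
   + intros _ mu. split.
     * intros [b [[a [Ha [Da [Sab Xab]]]] [Db [Sbm [a' [Ha' [Da' [Sa' Xa']]]]]]]].
       rewrite rng_comp in Sa' by exact Sbm.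
       exists (comp _ a' b). split.
       { apply (Her (comp _ a' (comp _ b mu))). exact Xa'. exists mu. split.
         rewrite src_comp by exact Sa'. exact Sbm. apply compA; assumption. }
       split. rewrite deg_comp by exact Sa'. congruence.
       split. rewrite src_comp by exact Sa'. exact Sbm.
       rewrite <- compA by assumption. exact Xa'.
     * intros [lam [Hl [Dl [Sl Xl]]]].
       destruct (unique_fact Q P L lam m n Pm Pn Dl) as [a [b [Sab [E [Da [Db _]]]]]].
       assert (Ha : x a) by (apply (Her lam); [exact Hl| exists b; split; assumption]).
       assert (Sbm : src b = rng mu) by (rewrite <- Sl, E; symmetry; apply src_comp; exact Sab).
       exists b. split.
       { exists a. split. exact Ha. split. exact Da. split. exact Sab. rewrite <- E. exact Hl. }
       split. exact Db. split. exact Sbm.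
       exists a. split. exact Ha. split. exact Da. split.
       rewrite rng_comp by exact Sbm. exact Sab.
       rewrite compA by assumption. rewrite <- E. exact Xl.
Qed.
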